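(* Let $A$ be a sub-tree of $T$, let $I',I''\subseteq\mathcal{I}_A$ be disjoint, and let $\Psi\subseteq V_A^{I'}$ and $\Phi\subseteq V_A^{I''}$. Then for every $x\in[0,d(r_A)]$, $$G(\Psi\cup\Phi,x)=G(\Psi,x)+G\big(\Phi,\;x+(d(r_A)-x)P(\Psi)\big),$$ where $P(\Psi)=0$ if $\Psi=\emptyset$ (note $x+(d(r_A)-x)P(\Psi)\le d(r_A)$).
   Context: Setting. $T$ is a finite tree rooted at $r_T$, node set $V_T$; every edge $e$ has weight $w_e\ge 0$. Every node $v$ has a probability $\pi_v\in(0,1]$ and a prize $p_v\in\mathbb{R}$. $d(v)$ is the total weight of the path from $r_T$ to $v$. A random set $\omega\subseteq V_T$ contains each node $v$ independently with probability $\pi_v$. For $S\subseteq V_T$, $P(S)=1-\prod_{s\in S}(1-\pi_s)$ ($P(\emptyset)=0$). For a node $a$, the sub-tree $A$ rooted at $r_A=a$ consists of $a$ and all its descendants, with node set $V_A$; if $a$ has children $c_1,\dots,c_m$, then $A_i$ ($1\le i\le m$) is the sub-tree rooted at $c_i$, $A_0$ is the sub-tree consisting of the single node $r_A$, $\mathcal{I}_A=\{0,1,\dots,m\}$, and $V_A^I=\bigcup_{i\in I}V_{A_i}$ for $I\subseteq\mathcal{I}_A$. For $Q\subseteq V_T$, $W(Q)$ is the total weight of the edges lying on at least one path from $r_T$ to a node of $Q$. For $S\subseteq V_A$ and $x\le d(r_A)$ the expected profit is $G(S,x)=\sum_{s\in S}p_s\pi_s-\mathbb{E}[W(S\cap\omega)]+x\,P(S)$.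 *)

(* Defs.v *)
From HB Require Import structures.
From mathcomp Require Import all_boot all_order all_algebra.
Set Implicit Arguments. Unset Strict Implicit. Unset Printing Implicit Defensive.
Import Order.TTheory GRing.Theory Num.Theory.
Local Open Scope ring_scope.

(* The edge from v <> r to its parent is identified with v; its weight is w v. *)
Definition is_rooted_tree (V : finType) (r : V) (par : V -> V) : Prop :=
  par r = r /\ forall v, connect (frel par) v r.

Definition anc (V : finType) (par : V -> V) (a u : V) : bool :=
  connect (frel par) u a.

Section Defs.
Variables (R : realFieldType) (V : finType) (r : V) (par : V -> V).
Variables (w pi p : V -> R).

Definition dist (v : V) : R := \sum_(u | anc par u v && (u != r)) w u.

Definition Pr (S : {set V}) : R := 1 - \prod_(s in S) (1 - pi s).

Definition Wt (Q : {set V}) : R :=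
  \sum_(v | (v != r) && [exists q in Q, anc par v q]) w v.

Definition prob_omega (om : {set V}) : R :=
  \prod_(v in om) pi v * \prod_(v in ~: om) (1 - pi v).

Definition EW (S : {set V}) : R :=
  \sum_(om : {set V}) prob_omega om * Wt (S :&: om).

Definition G (S : {set V}) (x : R) : R :=
  \sum_(s in S) p s * pi s - EW S + x * Pr S.

(* Index set I_A of the sub-tree rooted at a: index 0 is encoded by a itself,
   index i >= 1 by the child c_i of a. *)
Definition idx (a : V) : {set V} :=
  [set i | (i == a) || ((par i == a) && (i != a))].

Definition Vsub (a i : V) : {set V} :=
  if i == a then [set a] else [set u | anc par i u].

Definition VAI (a : V) (I : {set V}) : {set V} := \bigcup_(i in I) Vsub a i.

End Defs.

(* Main.v *)
Require Import Defs.
From HB Require Import structures.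
From mathcomp Require Import all_boot all_order all_algebra.
From mathcomp Require Import ring lra.
Import Order.TTheory GRing.Theory Num.Theory.
Local Open Scope ring_scope.
Set Implicit Arguments. Unset Strict Implicit. Unset Printing Implicit Defensive.

Section Tree.
Variables (V : finType) (r : V) (par : V -> V).
Hypothesis Ht : is_rooted_tree r par.

Lemma ancP u v : reflect (exists n, iter n par v = u) (anc par u v).
Proof.
apply: (iffP idP); rewrite /anc.
  by move=> H; exists (findex par v u); exact: iter_findex.
by case=> n <-; exact: fconnect_iter.
Qed.

Lemma anc_refl u : anc par u u.
Proof. exact: connect0. Qed.

Lemma anc_trans x y z : anc par x y -> anc par y z -> anc par x z.
Proof. rewrite /anc => H1 H2; exact: connect_trans H2 H1. Qed.

Lemma anc_par u : anc par (par u) u.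
Proof. by apply: connect1; rewrite /= eqxx. Qed.

Lemma anc_chain x y q : anc par x q -> anc par y q -> anc par x y || anc par y x.
Proof.
move=> /ancP [n Hn] /ancP [m Hm].
case: (leqP n m) => H.
  apply/orP; right; apply/ancP; exists (m - n)%N.
  by rewrite -Hn -iterD subnK.
apply/orP; left; apply/ancP; exists (n - m)%N.
by rewrite -Hm -iterD subnK // ltnW.
Qed.

Lemma anc_antisym x y : anc par x y -> anc par y x -> x = y.
Proof.
move=> /ancP [n Hn] /ancP [m Hm].
have Hc : iter (m + n) par y = y by rewrite iterD Hn Hm.
case: (posnP (m + n)) => Hmn.
  by move: Hmn => /eqP; rewrite addn_eq0 => /andP [/eqP Hm0 /eqP Hn0]; rewrite -Hn Hn0.
have [k Hk] : exists k, iter k par y = r by apply/ancP; exact: (proj2 Ht).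
have Hy : y = r.
  have Hj : forall j, iter (j * (m + n)) par y = y.
    elim=> [|j IH] //; by rewrite mulSn iterD IH Hc.
  rewrite -(Hj k) -(subnK (_ : k <= k * (m + n))%N); last first.
    by rewrite leq_pmulr.
  by rewrite iterD Hk iter_fix // (proj1 Ht).
by rewrite -Hn Hy iter_fix // (proj1 Ht).
Qed.

Lemma anc_child v c : anc par v c -> v = c \/ anc par v (par c).
Proof.
move=> /ancP [[|n] Hn]; first by left.
by right; apply/ancP; exists n; rewrite -iterSr.
Qed.

Section Sub.
Variables (a : V) (I1 I2 : {set V}).
Hypotheses (HI1 : I1 \subset idx par a) (HI2 : I2 \subset idx par a)
  (Hdisj : [disjoint I1 & I2]).

Lemma idx_child i : i \in idx par a -> i != a -> par i = a.
Proof. by rewrite inE => /orP [/eqP -> /eqP //| /andP [/eqP ->]]. Qed.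

Lemma anc_Vsub i q : i \in idx par a -> q \in Vsub par a i -> anc par a q.
Proof.
move=> Hi; rewrite /Vsub; case: eqP => [_|Hne]; first by rewrite inE => /eqP ->; exact: anc_refl.
rewrite inE => Hq; apply: anc_trans Hq.
rewrite -(idx_child Hi); last by apply/eqP.
exact: anc_par.
Qed.

Lemma VAI_P (I : {set V}) q : q \in VAI par a I -> exists2 i, i \in I & q \in Vsub par a i.
Proof. by move=> /bigcupP [i Hi Hq]; exists i. Qed.

Lemma anc_VAI (I : {set V}) q : I \subset idx par a -> q \in VAI par a I -> anc par a q.
Proof.
move=> HI /VAI_P [i Hi Hq]; apply: anc_Vsub Hq.
exact: (subsetP HI).
Qed.

Lemma child_case c q v : c \in idx par a -> c != a -> anc par c q -> anc par v q ->
  anc par v a \/ anc par c v.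
Proof.
move=> Hc Hca Hcq Hvq.
case/orP: (anc_chain Hvq Hcq) => H; last by right.
case: (anc_child H) => [->|]; first by right; exact: anc_refl.
by rewrite (idx_child Hc Hca); left.
Qed.

Lemma two_children c1 c2 : c1 \in idx par a -> c1 != a -> c2 \in idx par a -> c2 != a ->
  c1 != c2 -> anc par c1 c2 -> False.
Proof.
move=> H1 H1a H2 H2a H12 H.
case: (anc_child H) => [E|]; first by rewrite E eqxx in H12.
rewrite (idx_child H2 H2a) => H'.
have : c1 = a.
  apply: anc_antisym => //.
  by rewrite -{1}(idx_child H1 H1a); exact: anc_par.
by move/eqP; rewrite (negbTE H1a).
Qed.

Lemma i12_neq i1 i2 : i1 \in I1 -> i2 \in I2 -> i1 != i2.
Proof.
move=> H1 H2; apply/eqP => E; subst i2.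
by rewrite (disjointFr Hdisj H1) in H2.
Qed.

Lemma key v q1 q2 : q1 \in VAI par a I1 -> q2 \in VAI par a I2 ->
  anc par v q1 -> anc par v q2 -> anc par v a.
Proof.
move=> /VAI_P [i1 Hi1 Hq1] /VAI_P [i2 Hi2 Hq2] Hv1 Hv2.
have Hne := i12_neq Hi1 Hi2.
have Hi1' := subsetP HI1 _ Hi1; have Hi2' := subsetP HI2 _ Hi2.
move: Hq1; rewrite /Vsub; case: eqP => [_|/eqP Ha1].
  by rewrite inE => /eqP E; rewrite -E.
rewrite inE => Hq1.
move: Hq2; rewrite /Vsub; case: eqP => [_|/eqP Ha2].
  by rewrite inE => /eqP E; rewrite -E.
rewrite inE => Hq2.
case: (child_case Hi1' Ha1 Hq1 Hv1) => // A1.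
case: (child_case Hi2' Ha2 Hq2 Hv2) => // A2.
case/orP: (anc_chain A1 A2) => H.
  by case: (two_children Hi1' Ha1 Hi2' Ha2 Hne H).
by case: (two_children Hi2' Ha2 Hi1' Ha1 _ H); rewrite eq_sym.
Qed.

Lemma VAI_disj (Q1 Q2 : {set V}) : Q1 \subset VAI par a I1 -> Q2 \subset VAI par a I2 ->
  [disjoint Q1 & Q2].
Proof.
move=> H1 H2; apply/pred0P => q /=; apply/negP => /andP [Hq1 Hq2].
have Hq1' := subsetP H1 _ Hq1; have Hq2' := subsetP H2 _ Hq2.
have Eq : q = a.
  apply: anc_antisym; first exact: (key Hq1' Hq2' (anc_refl _) (anc_refl _)).
  exact: anc_VAI Hq1'.
subst q.
move: Hq1' Hq2' => /VAI_P [i1 Hi1 Ha1] /VAI_P [i2 Hi2 Ha2].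
have Hne := i12_neq Hi1 Hi2.
have F : forall i, i \in idx par a -> a \in Vsub par a i -> i = a.
  move=> i Hi; rewrite /Vsub; case: eqP => [->//|/eqP Hia].
  rewrite inE => Hia'; apply: anc_antisym => //.
  by rewrite -{1}(idx_child Hi Hia); exact: anc_par.
have E1 := F _ (subsetP HI1 _ Hi1) Ha1; have E2 := F _ (subsetP HI2 _ Hi2) Ha2.
by rewrite E1 E2 eqxx in Hne.
Qed.

Section Real.
Variables (R : realFieldType) (w pi : V -> R).

Lemma ex_inU (Q1 Q2 : {set V}) (P : pred V) :
  [exists q in Q1 :|: Q2, P q] = [exists q in Q1, P q] || [exists q in Q2, P q].
Proof.
apply/exists_inP/orP.
  by case=> q; rewrite inE => /orP [H|H] Hp; [left|right]; apply/exists_inP; exists q.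
by case=> /exists_inP [q Hq Hp]; exists q => //; rewrite inE Hq ?orbT.
Qed.

Lemma Wt_split (Q1 Q2 : {set V}) : Q1 \subset VAI par a I1 -> Q2 \subset VAI par a I2 ->
  Wt r par w (Q1 :|: Q2) = Wt r par w Q1 + Wt r par w Q2
    - (if (Q1 != set0) && (Q2 != set0) then dist r par w a else 0).
Proof.
move=> H1 H2; rewrite /Wt /dist.
set c := (Q1 != set0) && (Q2 != set0).
have -> : (if c then \sum_(u | anc par u a && (u != r)) w u else 0)
    = \sum_u (if c && (anc par u a && (u != r)) then w u else 0).
  rewrite big_mkcond /=; case: c => //=.
  by rewrite big1.
rewrite [X in X = _]big_mkcond [X in _ = X + _ - _]big_mkcond.
rewrite [X in _ = _ + X - _]big_mkcond -big_split -sumrB /=.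
apply: eq_bigr => v _.
rewrite ex_inU.
have Hf : [exists q in Q1, anc par v q] && [exists q in Q2, anc par v q] = c && anc par v a.
  apply/andP/andP.
    case=> /exists_inP [q1 Hq1 A1] /exists_inP [q2 Hq2 A2]; split.
      by apply/andP; split; apply/set0Pn; [exists q1|exists q2].
    exact: (key (subsetP H1 _ Hq1) (subsetP H2 _ Hq2) A1 A2).
  case=> /andP [/set0Pn [q1 Hq1] /set0Pn [q2 Hq2]] Ha; split; apply/exists_inP.
    by exists q1 => //; apply: anc_trans Ha _; exact: anc_VAI (subsetP H1 _ Hq1).
  by exists q2 => //; apply: anc_trans Ha _; exact: anc_VAI (subsetP H2 _ Hq2).
move: Hf.
case: [exists q in Q1, anc par v q]; case: [exists q in Q2, anc par v q];
  case: c; case: (anc par v a); case: (v != r) => //= _; ring.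
Qed.

Lemma pw_prod (om : {set V}) :
  prob_omega pi om = \prod_v (if v \in om then pi v else 1 - pi v).
Proof.
rewrite /prob_omega big_mkcond [X in _ * X = _]big_mkcond -big_split /=.
apply: eq_bigr => v _; rewrite inE; case: (v \in om) => /=; ring.
Qed.

Lemma prob_empty (S : {set V}) :
  \sum_(om : {set V}) prob_omega pi om * (if S :&: om == set0 then 1 else 0)
  = \prod_(s in S) (1 - pi s).
Proof.
transitivity (\sum_(om in {set V})
   \prod_v (if v \in om then (if v \in S then 0 else pi v) else 1 - pi v)).
  apply: eq_big => // om _; rewrite pw_prod; case: eqP => [E|/eqP NE].
    rewrite mulr1; apply: eq_bigr => v _; case Hv: (v \in om) => //.
    case HS: (v \in S) => //.
    have : v \in S :&: om by rewrite inE HS Hv.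
    by rewrite E inE.
  rewrite mulr0; case/set0Pn: NE => v; rewrite inE => /andP [HS Hv].
  by rewrite (bigD1 v) //= Hv HS mul0r.
rewrite -bigA_distr [RHS]big_mkcond /=; apply: eq_bigr => v _.
case: (v \in S); ring.
Qed.

Lemma bigU_prod (A B : {set V}) (F : V -> R) : [disjoint A & B] ->
  \prod_(i in A :|: B) F i = \prod_(i in A) F i * \prod_(i in B) F i.
Proof. by move=> H; rewrite -bigU //; apply: eq_bigl => i; rewrite !inE. Qed.

Lemma bigU_sum (A B : {set V}) (F : V -> R) : [disjoint A & B] ->
  \sum_(i in A :|: B) F i = \sum_(i in A) F i + \sum_(i in B) F i.
Proof. by move=> H; rewrite -bigU //; apply: eq_bigl => i; rewrite !inE. Qed.

Lemma prob_both (Psi Phi : {set V}) : [disjoint Psi & Phi] ->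
  \sum_(om : {set V}) prob_omega pi om *
     (if (Psi :&: om != set0) && (Phi :&: om != set0) then 1 else 0)
  = Pr pi Psi * Pr pi Phi.
Proof.
move=> Hd.
transitivity (\sum_(om : {set V}) prob_omega pi om * (if set0 :&: om == set0 then 1 else 0)
  - \sum_(om : {set V}) prob_omega pi om * (if Psi :&: om == set0 then 1 else 0)
  - \sum_(om : {set V}) prob_omega pi om * (if Phi :&: om == set0 then 1 else 0)
  + \sum_(om : {set V}) prob_omega pi om * (if (Psi :|: Phi) :&: om == set0 then 1 else 0)).
  rewrite -!sumrB -big_split /=; apply: eq_bigr => om _.
  rewrite set0I eqxx setIUl setU_eq0.
  case: (Psi :&: om == set0); case: (Phi :&: om == set0) => /=; ring.
rewrite !prob_empty big_set0 bigU_prod // /Pr; ring.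
Qed.

Lemma EW_split (Psi Phi : {set V}) : Psi \subset VAI par a I1 -> Phi \subset VAI par a I2 ->
  EW r par w pi (Psi :|: Phi) = EW r par w pi Psi + EW r par w pi Phi
   - dist r par w a * \sum_(om : {set V}) prob_omega pi om *
     (if (Psi :&: om != set0) && (Phi :&: om != set0) then 1 else 0).
Proof.
move=> H1 H2; rewrite /EW big_distrr -big_split -sumrB /=; apply: eq_bigr => om _.
rewrite setIUl Wt_split; last 2 first.
- by apply: subset_trans H1; exact: subsetIl.
- by apply: subset_trans H2; exact: subsetIl.
case: ((Psi :&: om != set0) && (Phi :&: om != set0)); ring.
Qed.
End Real.
End Sub.
End Tree.

Theorem proposition6 (R : realFieldType) (V : finType) (r : V) (par : V -> V)
    (w pi p : V -> R)
    (Htree : is_rooted_tree r par)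
    (Hw : forall v, 0 <= w v)
    (Hpi : forall v, 0 < pi v <= 1)
    (a : V) (I1 I2 : {set V})
    (HI1 : I1 \subset idx par a) (HI2 : I2 \subset idx par a)
    (Hdisj : [disjoint I1 & I2])
    (Psi Phi : {set V})
    (HPsi : Psi \subset VAI par a I1) (HPhi : Phi \subset VAI par a I2)
    (x : R) (Hx0 : 0 <= x) (Hx1 : x <= dist r par w a) :
  G r par w pi p (Psi :|: Phi) x =
    G r par w pi p Psi x
    + G r par w pi p Phi (x + (dist r par w a - x) * Pr pi Psi).
Proof.
have Hd := VAI_disj Htree HI1 HI2 Hdisj HPsi HPhi.
rewrite /G (EW_split Htree HI1 HI2 Hdisj w pi HPsi HPhi) (prob_both pi Hd).
rewrite bigU_sum // /Pr bigU_prod //; ring.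
Qed.
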